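(* Let $G=(V,D,B)$ be a mixed graph on $n$ nodes with covariance matrix $\Sigma=\phi_G(\Lambda,\Omega)=(I-\Lambda)^{-T}\Omega(I-\Lambda)^{-1}$. Let $S=\{s_1,\dots,s_k\}$ and $T=\{t_1,\dots,t_k\}\subset V$, and for every $1\le i\le k$ let $H_i=\{h^i_1,\dots,h^i_{\ell_i}\}\subset\mathrm{pa}(s_i)$. Suppose there exists a half-trek system from $S$ to $T$ with no sided intersection. Then the $k\times k$ matrix $A$ with entries $$A_{ij}=\Sigma_{s_it_j}-\sum_{m=1}^{\ell_i}\Sigma_{h^i_mt_j}\lambda_{h^i_ms_i}$$ is generically invertible, i.e. $\det A$ is not identically zero as a function of $(\Lambda,\Omega)$ (so $\det A\neq 0$ for all parameters outside a proper algebraic subset of the parameter space).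
   Context: A mixed graph $G=(V,D,B)$ has directed edges $D$ ($v\to w$) and symmetric bidirected edges $B$ ($v\leftrightarrow w$), no self-loops; $\mathrm{pa}(v)=\{w:w\to v\in G\}$. Parameters: $\Lambda=(\lambda_{uv})$ real (or indeterminate) supported on $D$ with $I-\Lambda$ invertible, $\Omega$ positive definite with $\omega_{uv}=0$ for $u\ne v$ unless $u\leftrightarrow v\in G$. A path is a sequence of edges (directed edges may be traversed in either direction, vertices may repeat). A trek from $v$ to $w$ is a path of the form $v=v^L_l\leftarrow\cdots\leftarrow v^L_0\leftrightarrow v^R_0\to\cdots\to v^R_r=w$ (Left side $\{v^L_0,\dots,v^L_l\}$, Right side $\{v^R_0,\dots,v^R_r\}$) or $v=v^L_l\leftarrow\cdots\leftarrow v^L_1\leftarrow v^T\to v^R_1\to\cdots\to v^R_r=w$ (Left side $\{v^T,v^L_1,\dots,v^L_l\}$, Right side $\{v^T,v^R_1,\dots,v^R_r\}$), possibly empty. A half-trek is a trek whose Left side has exactly one vertex. A half-trek system from $S$ to $T$ is a collection of half-treks with set of sources $S$ and set of targets $T$; it has no sided intersection if distinct half-treks have disjoint Left sides and disjoint Right sides. *)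

(* Defs.v *)
From HB Require Import structures.
From mathcomp Require Import all_boot all_order all_algebra.
From mathcomp Require Import reals.
Set Implicit Arguments. Unset Strict Implicit. Unset Printing Implicit Defensive.
Import Order.TTheory GRing.Theory Num.Theory.
Local Open Scope ring_scope.

Definition mixed_graph (n : nat) (D B : rel 'I_n) : Prop :=
  (forall v, ~~ D v v) /\ (forall v, ~~ B v v) /\ (forall u v, B u v = B v u).

(* A half-trek (left side a single vertex v) is either
   - HTdir v r :  v -> r_1 -> ... -> r_m   (top v; Right side {v} ∪ r; m = 0 is
                  the empty trek from v to v), or
   - HTbi v u r : v <-> u -> r_1 -> ... -> r_m (Right side {u} ∪ r).
   Vertices may repeat. *)
Inductive halftrek (n : nat) :=
  | HTdir of 'I_n & seq 'I_n
  | HTbi of 'I_n & 'I_n & seq 'I_n.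

Definition ht_valid n (D B : rel 'I_n) (p : halftrek n) : bool :=
  match p with
  | HTdir v r => path D v r
  | HTbi v u r => B v u && path D u r
  end.

Definition ht_source n (p : halftrek n) : 'I_n :=
  match p with HTdir v _ => v | HTbi v _ _ => v end.

Definition ht_target n (p : halftrek n) : 'I_n :=
  match p with HTdir v r => last v r | HTbi _ u r => last u r end.

Definition ht_left n (p : halftrek n) : {set 'I_n} := [set ht_source p].

Definition ht_right n (p : halftrek n) : {set 'I_n} :=
  match p with HTdir v r => [set x in v :: r] | HTbi _ u r => [set x in u :: r] end.

Definition has_nsi_halftrek_system n (D B : rel 'I_n) (S T : {set 'I_n}) : Prop :=
  exists m (pi : 'I_m -> halftrek n),
    [/\ forall i, ht_valid D B (pi i),
        [set ht_source (pi i) | i in 'I_m] = S,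
        [set ht_target (pi i) | i in 'I_m] = T &
        forall i j, i != j ->
          [disjoint ht_left (pi i) & ht_left (pi j)] &&
          [disjoint ht_right (pi i) & ht_right (pi j)]].

Definition param_space (R : realType) n (D B : rel 'I_n)
    (Lambda Omega : 'M[R]_n) : Prop :=
  [/\ forall u v, ~~ D u v -> Lambda u v = 0,
      (1%:M - Lambda) \in unitmx,
      Omega^T = Omega,
      forall x : 'rV[R]_n, x != 0 -> 0 < (x *m Omega *m x^T) ord0 ord0 &
      forall u v, u != v -> ~~ B u v -> Omega u v = 0].

Definition phiG (R : realType) n (Lambda Omega : 'M[R]_n) : 'M[R]_n :=
  (invmx (1%:M - Lambda))^T *m Omega *m invmx (1%:M - Lambda).

Definition pa n (D : rel 'I_n) (v : 'I_n) : {set 'I_n} := [set w | D w v].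

Definition matA (R : realType) n k (s t : 'I_k -> 'I_n) (H : 'I_k -> {set 'I_n})
    (Lambda Omega : 'M[R]_n) : 'M[R]_k :=
  let Sigma := phiG Lambda Omega in
  \matrix_(i, j) (Sigma (s i) (t j)
                  - \sum_(h in H i) Sigma h (t j) * Lambda h (s i)).

(* Main.v *)
Require Import Defs.
From HB Require Import structures.
From mathcomp Require Import all_boot all_order all_algebra.
From mathcomp Require Import reals.
From mathcomp Require Import all_fingroup.
Set Implicit Arguments. Unset Strict Implicit. Unset Printing Implicit Defensive.
Import Order.TTheory GRing.Theory Num.Theory.
Local Open Scope ring_scope.


Lemma det_unitri (R : comNzRingType) k (A : 'M[R]_k) (f : 'I_k -> nat) :
  (forall i, A i i = 1) -> (forall i j, i != j -> A i j != 0 -> (f i < f j)%N) ->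
  \det A = 1.
Proof.
move=> Hd Ho.
rewrite /determinant (bigD1 1%g) //=.
have -> : \sum_(sg : 'S_k | sg != 1%g) (-1) ^+ sg * \prod_i A i (sg i) = 0.
  apply: big1 => sg Hsg; suff -> : \prod_i A i (sg i) = 0 by rewrite mulr0.
2: rewrite addr0 odd_perm1 expr0 mul1r; apply: big1 => i _; by rewrite perm1 Hd.
case: (boolP [forall i, A i (sg i) != 0]) => [/forallP Hall|].
  exfalso.
  have Hle : forall i, (f i <= f (sg i))%N.
    move=> i; case: (eqVneq i (sg i)) => [<-//|ne]; exact/ltnW/Ho.
  have [i Hi] : exists i, i != sg i.
    apply/existsP; apply: contraR Hsg => /existsPn H; apply/eqP/permP => x.
    by rewrite perm1; have := H x; rewrite negbK => /eqP <-.
  have Hlt : (\sum_i f i < \sum_i f (sg i))%N.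
    rewrite (bigD1 i) //= [X in (_ < X)%N](bigD1 i) //=.
    rewrite -addSn leq_add //; first exact: Ho.
    by apply: leq_sum => j _; apply: Hle.
  move: Hlt; by rewrite (reindex_inj (@perm_inj _ sg)) /= ltnn.
rewrite negb_forall => /existsP [i]; rewrite negbK => /eqP Hi.
by rewrite (bigD1 i) //= Hi mul0r.
Qed.

Lemma exists_maxR (R : realDomainType) (T : finType) (F : T -> R) (x0 : T) :
  exists j, forall l, F l <= F j.
Proof.
case: (@arg_maxP _ R T x0 xpredT F isT) => j _ H; exists j => l; exact: H.
Qed.

Lemma det_diagdom (R : realFieldType) k (A : 'M[R]_k) :
  (forall i, \sum_(j | j != i) `|A i j| < `|A i i|) -> \det A != 0.
Proof.
move=> Hdom; rewrite -det_tr; apply/negP => /det0P [v vnz vA0].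
have [i0 Hi0] : exists i, v 0 i != 0.
  apply/existsP; apply: contraR vnz => /existsPn H; apply/eqP/rowP => i.
  by rewrite mxE; have := H i; rewrite negbK => /eqP.
have [j Hj] := exists_maxR (fun l => `|v 0 l|) i0.
have vj0 : 0 < `|v 0 j|.
  by rewrite normr_gt0; apply: contraTneq (Hj i0) => ->; rewrite normr0 -ltNge normr_gt0.
have E : \sum_l A j l * v 0 l = 0.
  move/rowP: vA0 => /(_ j); rewrite !mxE => H; apply: etrans H.
  by apply: eq_bigr => l _; rewrite !mxE mulrC.
rewrite (bigD1 j) //= in E.
have E2 : `|A j j| * `|v 0 j| = `|\sum_(l | l != j) A j l * v 0 l|.
  have E3 : A j j * v 0 j = - \sum_(l | l != j) A j l * v 0 l.
    by apply/eqP; rewrite -addr_eq0 E.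
  by rewrite -normrM E3 normrN.
have : `|A j j| * `|v 0 j| <= (\sum_(l | l != j) `|A j l|) * `|v 0 j|.
  rewrite E2 mulr_suml; apply: le_trans (ler_norm_sum _ _ _) _.
  apply: ler_sum => l _; rewrite normrM; apply: ler_wpM2l => //.
rewrite ler_pM2r // leNgt; by rewrite Hdom.
Qed.

Lemma det_poly_avoid (R : numFieldType) k (A0 A1 : 'M[R]_k) :
  \det A0 != 0 -> forall c : R, exists x, c <= x /\ \det (A0 + x *: A1) != 0.
Proof.
move=> H0 c.
pose M : 'M[{poly R}]_k := map_mx polyC A0 + 'X *: map_mx polyC A1.
pose p := \det M.
have Ev : forall x, p.[x] = \det (A0 + x *: A1).
  move=> x; rewrite -horner_evalE /p -det_map_mx; congr (\det _).
  by apply/matrixP => i j; rewrite !mxE /= horner_evalE hornerD hornerM hornerX !hornerC.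
have pnz : p != 0.
  apply: contra H0 => /eqP p0; apply/eqP.
  by have := Ev 0; rewrite p0 horner0 scale0r addr0 => <-.
pose rs := [seq c + i%:R | i <- iota 0 (size p)].
have Urs : uniq rs.
  rewrite map_inj_uniq ?iota_uniq // => i j /addrI /eqP; by rewrite eqr_nat => /eqP.
have : ~~ all (root p) rs.
  apply/negP => Hall; have := max_poly_roots pnz Hall Urs.
  by rewrite size_map size_iota ltnn.
case/allPn => x /mapP [i _ ->] Hx; exists (c + i%:R); split.
  by rewrite lerDl ler0n.
by rewrite -Ev.
Qed.

Section Core.
Variables (R : realType) (n k : nat) (D B : rel 'I_n) (s tau : 'I_k -> 'I_n)
  (H : 'I_k -> {set 'I_n}) (top : 'I_k -> 'I_n) (bi : 'I_k -> bool)
  (p : 'I_k -> seq 'I_n).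
Hypothesis Birr : forall v, ~~ B v v.
Hypothesis Bsym : forall u v, B u v = B v u.
Hypothesis sinj : injective s.
Hypothesis Hpath : forall i, path D (top i) (p i).
Hypothesis Huniq : forall i, uniq (top i :: p i).
Hypothesis Hlast : forall i, last (top i) (p i) = tau i.
Hypothesis Hkind : forall i,
  if bi i then B (s i) (top i) && (s i \notin top i :: p i) else top i == s i.
Hypothesis Hdisj : forall i j x, x \in top i :: p i -> x \in top j :: p j -> i = j.

Definition Rs i := top i :: p i.
Arguments Rs : simpl never.

Definition prec a b := (a == b) ||
  [exists i, [&& a \in Rs i, b \in Rs i & (index a (Rs i) <= index b (Rs i))%N]].

Definition Xm : 'M[R]_n := \matrix_(a, b) (prec a b)%:R.
Definition Lm : 'M[R]_n := \matrix_(a, b)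
  [exists i, [&& a \in Rs i, b \in Rs i & index b (Rs i) == (index a (Rs i)).+1]]%:R.

Lemma precE i a b : a \in Rs i ->
  prec a b = (a == b) || (b \in Rs i) && (index a (Rs i) <= index b (Rs i))%N.
Proof.
move=> ai; rewrite /prec; congr (_ || _); apply/existsP/idP.
  by case=> j /and3P [aj bj le]; have E := Hdisj ai aj; subst j; rewrite bj le.
by case/andP=> bi' le; exists i; rewrite ai bi' le.
Qed.

Lemma prec_out a b : (forall i, a \notin Rs i) -> prec a b = (a == b).
Proof.
move=> H0; rewrite /prec; case: (a == b) => //=; apply/existsP => [[i /and3P [ai _ _]]].
by move: (H0 i); rewrite ai.
Qed.

Lemma LmE i a c : a \in Rs i ->
  Lm a c = ((c \in Rs i) && (index c (Rs i) == (index a (Rs i)).+1))%:R.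
Proof.
move=> ai; rewrite mxE; congr (nat_of_bool _)%:R; apply/existsP/idP.
  by case=> j /and3P [aj cj e]; have E := Hdisj ai aj; subst j; rewrite cj e.
by case/andP=> ci e; exists i; rewrite ai ci e.
Qed.

Lemma Lm_out a c : (forall i, a \notin Rs i) -> Lm a c = 0.
Proof.
move=> H0; rewrite mxE; case: existsP => // [[i /and3P [ai _ _]]].
by move: (H0 i); rewrite ai.
Qed.

Lemma index_inj i a b : a \in Rs i -> b \in Rs i -> index a (Rs i) = index b (Rs i) -> a = b.
Proof. by move=> ai bi' e; rewrite -(nth_index a ai) e nth_index. Qed.

Lemma LX : (1%:M - Lm) *m Xm = 1%:M.
Proof.
apply/matrixP => a b; rewrite mulmxBl mul1mx !mxE.
case: (boolP [exists i, a \in Rs i]) => [/existsP [i ai]|].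
  have Xab := precE b ai.
  case: (ltnP (index a (Rs i)).+1 (size (Rs i))) => hlt.
    pose c0 := nth a (Rs i) (index a (Rs i)).+1.
    have c0i : c0 \in Rs i by apply: mem_nth.
    have ic0 : index c0 (Rs i) = (index a (Rs i)).+1 by rewrite index_uniq //; apply: Huniq.
    rewrite (bigD1 c0) //= big1 ?addr0; last first.
      move=> c cc0; rewrite (LmE c ai); case: (boolP (c \in Rs i)) => ci /=; last by rewrite mul0r.
      case: eqP => e; last by rewrite mul0r.
      by exfalso; move/eqP: cc0; apply; apply: (index_inj ci c0i); rewrite ic0; exact: e.
    rewrite (LmE c0 ai) c0i ic0 eqxx mul1r !mxE Xab (precE b c0i) ic0.
    case: (eqVneq a b) => [<-|ab].
      have -> : (c0 == a) = false.
        by apply/negbTE/eqP => e; move: ic0; rewrite e => /n_Sn.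
      by rewrite ltnn andbF orbF orTb subr0.
    rewrite orFb.
    case: (boolP (b \in Rs i)) => bi'; last first.
      have -> : (c0 == b) = false.
        by apply/negbTE/eqP => e; move: bi'; rewrite -e c0i.
      by rewrite !andFb orbF subrr.
    rewrite !andTb.
    have -> : (c0 == b) = ((index a (Rs i)).+1 == index b (Rs i)).
      apply/eqP/eqP => [<-//|e]; apply: (index_inj c0i bi'); by rewrite ic0.
    have -> : ((index a (Rs i)).+1 == index b (Rs i)) || ((index a (Rs i)).+1 <= index b (Rs i))%N
       = ((index a (Rs i)).+1 <= index b (Rs i))%N.
      by apply/orb_idl => /eqP ->.
    have -> : (index a (Rs i) <= index b (Rs i))%N = (index a (Rs i) < index b (Rs i))%N.
      rewrite leq_eqVlt; case: eqP => // e; exfalso; move/eqP: ab; apply.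
      exact: (index_inj ai bi' e).
    by rewrite subrr.
  rewrite big1 ?subr0; last first.
    move=> c _; rewrite (LmE c ai); case: (boolP (c \in Rs i)) => ci; last by rewrite andFb mul0r.
    case: (eqVneq (index c (Rs i)) (index a (Rs i)).+1) => e; last by rewrite andbF mul0r.
    by have := index_mem c (Rs i); rewrite ci e ltnNge hlt.
  rewrite Xab; case: (eqVneq a b) => [<-|ab]; first by rewrite orTb.
  rewrite orFb; case: (boolP (b \in Rs i)) => bi'; last by rewrite andFb.
  rewrite andTb.
  have hb : (index b (Rs i) < size (Rs i))%N by rewrite index_mem.
  case: leqP => // hab; exfalso; move/eqP: ab; apply; apply: (index_inj ai bi').
  by apply/eqP; rewrite eqn_leq hab /=; rewrite -ltnS; apply: leq_trans hb _.
move/existsPn => H0.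
rewrite big1 ?subr0; first by rewrite prec_out.
by move=> c _; rewrite Lm_out ?mul0r.
Qed.


Lemma prec_refl a : prec a a.
Proof. by rewrite /prec eqxx. Qed.

Lemma prec_in a b : prec a b -> a != b -> exists i, [/\ a \in Rs i, b \in Rs i &
   (index a (Rs i) < index b (Rs i))%N].
Proof.
move=> pab ab; move: pab; rewrite /prec (negbTE ab) orFb => /existsP [i /and3P [ai bi' le]].
exists i; split => //; rewrite ltn_neqAle le andbT; apply/eqP => e.
by move/eqP: ab; apply; apply: (index_inj ai bi' e).
Qed.

Lemma prec_trans a b c : prec a b -> prec b c -> prec a c.
Proof.
case: (eqVneq a b) => [<-//|ab] pab; case: (eqVneq b c) => [<-//|bc] pbc.
have [i [ai bi' lab]] := prec_in pab ab; have [j [bj cj lbc]] := prec_in pbc bc.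
have E := Hdisj bi' bj; subst j.
rewrite (precE c ai) cj /=; apply/orP; right; apply: ltnW; exact: ltn_trans lab lbc.
Qed.

Lemma prec_antisym a b : prec a b -> prec b a -> a = b.
Proof.
case: (eqVneq a b) => [//|ab] pab pba.
have [i [ai bi' lab]] := prec_in pab ab.
have ba : b != a by rewrite eq_sym.
have [j [bj aj lba]] := prec_in pba ba.
have E := Hdisj bi' bj; subst j.
by move: (ltn_trans lab lba); rewrite ltnn.
Qed.

Lemma prec_last a j : prec a (tau j) = (a \in Rs j).
Proof.
have tj : tau j \in Rs j by rewrite -Hlast /Rs mem_last.
case: (boolP (a \in Rs j)) => aj.
  rewrite (precE _ aj) tj andTb; apply/orP; right.
  rewrite -Hlast index_last ?Huniq //; have := index_mem a (Rs j); rewrite aj.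
  by rewrite /Rs /= ltnS.
apply/negbTE/negP; case: (eqVneq a (tau j)) => [e|atj]; first by rewrite e tj in aj.
move=> pat; have [i [ai ti _]] := prec_in pat atj.
by have E := Hdisj ti tj; subst i; rewrite ai in aj.
Qed.

Lemma Lm_ne0 h c : Lm h c != 0 -> exists i, [/\ h \in Rs i, c \in Rs i &
  index c (Rs i) = (index h (Rs i)).+1].
Proof.
rewrite mxE; case: existsP => [[i /and3P [hi ci /eqP e]] _|]; last by rewrite eqxx.
by exists i.
Qed.

Lemma Lm_prec h c : Lm h c != 0 -> prec h c /\ h != c.
Proof.
case/Lm_ne0 => i [hi ci e]; split.
  by rewrite (precE _ hi) ci e leqnSn orbT.
by apply/eqP => hc; move: e; rewrite hc => /n_Sn.
Qed.

Lemma Lm_D a b : Lm a b != 0 -> D a b.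
Proof.
case/Lm_ne0 => i [ai bi' e].
have hs : (index a (Rs i) < size (p i))%N.
  by have := index_mem b (Rs i); rewrite bi' e /Rs /= ltnS.
have := Hpath i; move/(pathP a) => /(_ _ hs).
rewrite -/(Rs i) nth_index // => Hd.
suff -> : b = nth a (p i) (index a (Rs i)) by [].
by rewrite -[b](nth_index a bi') e.
Qed.



Lemma sum_delta (F : 'I_n -> R) x : \sum_a (a == x)%:R * F a = F x.
Proof.
rewrite (bigD1 x) //= eqxx mul1r big1 ?addr0 // => a /negbTE ->; by rewrite mul0r.
Qed.

Lemma sum_deltar (F : 'I_n -> R) x : \sum_a F a * (a == x)%:R = F x.
Proof. rewrite -[RHS]sum_delta; apply: eq_bigr => a _; exact: mulrC. Qed.

Definition Gm (g : R) : 'M[R]_(n,k) :=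
  \matrix_(a, l) ((a == s l)%:R + g * (bi l && (a == top l))%:R).
Definition Cm : 'M[R]_(n,k) :=
  \matrix_(a, i) ((a == s i)%:R - (a \in H i)%:R * Lm a (s i)).
Definition Et : 'M[R]_(n,k) := \matrix_(a, j) (a == tau j)%:R.
Definition Vm := Xm *m Cm.
Definition Wm := Xm *m Et.

Lemma GtE g (F : 'M[R]_(n,k)) l i :
  ((Gm g)^T *m F) l i = F (s l) i + g * (bi l)%:R * F (top l) i.
Proof.
rewrite !mxE.
under eq_bigr => a _ do rewrite !mxE mulrDl.
rewrite big_split /= sum_delta; congr (_ + _).
case: (bi l) => /=.
  rewrite mulr1 -(sum_delta (fun a => F a i) (top l)) mulr_sumr.
  by apply: eq_bigr => a _; rewrite mulrA.
by rewrite mulr0 mul0r big1 // => a _; rewrite mul0r.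
Qed.

Lemma WmE a j : Wm a j = (a \in Rs j)%:R.
Proof.
rewrite !mxE; under eq_bigr => c _ do rewrite !mxE.
by rewrite sum_deltar prec_last.
Qed.

Lemma VmE a i : Vm a i = (prec a (s i))%:R -
   \sum_c (prec a c)%:R * ((c \in H i)%:R * Lm c (s i)).
Proof.
rewrite /Vm mxE; under eq_bigr => c _ do rewrite [Cm _ _]mxE [Xm _ _]mxE mulrBr.
by rewrite sumrB sum_deltar.
Qed.

Lemma Vm_diag i : Vm (s i) i = 1.
Proof.
rewrite VmE prec_refl big1 ?subr0 // => c _.
case: (eqVneq (Lm c (s i)) 0) => [->|nz]; first by rewrite !mulr0.
have [pc ne] := Lm_prec nz.
case: (boolP (prec (s i) c)) => psc; last by rewrite mul0r.
by move/eqP: ne; case; apply: prec_antisym.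
Qed.

Lemma Vm_ne0 a i : Vm a i != 0 -> prec a (s i).
Proof.
rewrite VmE; case: (boolP (prec a (s i))) => // npa.
rewrite sub0r oppr_eq0 => /eqP.
rewrite big1 ?eqxx // => c _.
case: (eqVneq (Lm c (s i)) 0) => [->|nz]; first by rewrite !mulr0.
have [pc _] := Lm_prec nz.
case: (boolP (prec a c)) => pac; last by rewrite mul0r.
by move: npa; rewrite (prec_trans pac pc).
Qed.


Definition M0 : 'M[R]_k := \matrix_(l, i) Vm (s l) i.
Definition M1 : 'M[R]_k := \matrix_(l, i) ((bi l)%:R * Vm (top l) i).

Lemma GV g : (Gm g)^T *m Vm = M0 + g *: M1.
Proof. by apply/matrixP => l i; rewrite GtE !mxE mulrA. Qed.

Lemma detM0 : \det M0 = 1.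
Proof.
apply: (@det_unitri _ _ _ (fun i => #|[set a | prec a (s i)]|)).
  by move=> i; rewrite mxE Vm_diag.
move=> i j ij; rewrite mxE => /Vm_ne0 pij; apply: proper_card; apply/properP; split.
  by apply/subsetP => a; rewrite !inE => pa; exact: prec_trans pa pij.
exists (s j); rewrite !inE ?prec_refl //; apply/negP => pji.
by move/eqP: ij; apply; apply: sinj; apply: prec_antisym.
Qed.

Lemma sum_le1 x l : \sum_(j | j != l) `|(x \in Rs j)%:R| <= 1 :> R.
Proof.
case: (boolP [exists j, (j != l) && (x \in Rs j)]) => [/existsP [j0 /andP [j0l xj0]]|].
  rewrite (bigD1 j0) //= big1 ?addr0; first by rewrite xj0 normr1.
  move=> j /andP [_ jj0]; case: (boolP (x \in Rs j)) => xj; last by rewrite normr0.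
  by move/eqP: jj0; case; apply: (Hdisj xj xj0).
move/existsPn => H0; rewrite big1 ?ler01 // => j jl.
by have := H0 j; rewrite jl andTb => /negbTE ->; rewrite normr0.
Qed.

Lemma top_in l : top l \in Rs l.
Proof. by rewrite /Rs mem_head. Qed.

Lemma detGW g : 2 <= g -> \det ((Gm g)^T *m Wm) != 0.
Proof.
move=> g2; apply: det_diagdom => l.
have offE : forall j, j != l -> ((Gm g)^T *m Wm) l j = (s l \in Rs j)%:R.
  move=> j jl; rewrite GtE !WmE.
  have -> : (top l \in Rs j) = false.
    by apply/negP => tj; move/eqP: jl; apply; apply: (Hdisj tj (top_in l)).
  by rewrite mulr0 addr0.
under eq_bigr => j jl do rewrite offE //.
rewrite GtE !WmE top_in.
have := Hkind l; case: (bi l) => [/andP [_ sl]|/eqP tl].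
  rewrite (negbTE sl) /= !mulr1 add0r.
  apply: le_lt_trans (sum_le1 _ _) _.
  have g0 : 0 <= g by apply: le_trans g2.
  rewrite ger0_norm //; apply: (lt_le_trans _ g2); by rewrite ltr1n.
rewrite -tl top_in /= mulr0 mul0r addr0 normr1 big1 ?ltr01 //.
move=> j jl; have -> : (top l \in Rs j) = false.
  by apply/negP => tj; move/eqP: jl; apply; apply: (Hdisj tj (top_in l)).
by rewrite normr0.
Qed.


Lemma invX : invmx (1%:M - Lm) = Xm.
Proof.
have [u _] := mulmx1_unit LX.
transitivity (invmx (1%:M - Lm) *m ((1%:M - Lm) *m Xm)); first by rewrite LX mulmx1.
by rewrite mulmxA mulVmx // mul1mx.
Qed.

Lemma matA_CSE (Om : 'M[R]_n) :
  matA s tau H Lm Om = Cm^T *m (phiG Lm Om) *m Et.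
Proof.
apply/matrixP => i j; rewrite /matA mxE [RHS]mxE.
under [RHS]eq_bigr => b _ do rewrite [Et _ _]mxE.
rewrite sum_deltar [RHS]mxE.
under [RHS]eq_bigr => a _ do rewrite [Cm^T _ _]mxE [Cm _ _]mxE mulrBl.
rewrite sumrB sum_delta; congr (_ - _).
rewrite big_mkcond; apply: eq_bigr => a _.
by case: (a \in H i); rewrite ?mul1r ?mul0r // mulrC.
Qed.

Lemma matA_eq g e :
  matA s tau H Lm (Gm g *m (Gm g)^T + e%:M) =
  (M0 + g *: M1)^T *m ((Gm g)^T *m Wm) + e *: (Vm^T *m Wm).
Proof.
rewrite matA_CSE /phiG invX -GV /Vm /Wm !trmx_mul !trmxK.
rewrite !(mulmxDr, mulmxDl).
congr (_ + _); first by rewrite !mulmxA.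
by rewrite mul_mx_scalar -!scalemxAl -!scalemxAr !mulmxA -scalemxAl.
Qed.

Lemma sqsum_ge0 m (y : 'rV[R]_m) : 0 <= (y *m y^T) 0 0.
Proof. rewrite mxE; apply: sumr_ge0 => i _; rewrite mxE -expr2; exact: sqr_ge0. Qed.

Lemma sqsum_gt0 m (y : 'rV[R]_m) : y != 0 -> 0 < (y *m y^T) 0 0.
Proof.
move=> ynz; have [i0 Hi0] : exists i, y 0 i != 0.
  apply/existsP; apply: contraR ynz => /existsPn H0; apply/eqP/rowP => i.
  by rewrite mxE; have := H0 i; rewrite negbK => /eqP.
rewrite mxE (bigD1 i0) //= mxE -expr2; apply: ltr_pwDl.
  by rewrite lt0r sqr_ge0 andbT expf_neq0.
by apply: sumr_ge0 => i _; rewrite mxE -expr2; exact: sqr_ge0.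
Qed.

Lemma Gm_ne0 g a l : Gm g a l != 0 -> (a == s l) || (bi l && (a == top l)).
Proof.
rewrite mxE; case: (a == s l) => //; case: (bi l && (a == top l)) => //.
by rewrite /= mulr0 addr0 eqxx.
Qed.

Lemma core_main : exists (Lambda Omega : 'M[R]_n),
  param_space D B Lambda Omega /\ \det (matA s tau H Lambda Omega) != 0.
Proof.
have dM0 : \det M0 != 0 by rewrite detM0 oner_neq0.
have [g [g2 Hg]] := det_poly_avoid M1 dM0 2.
pose A0 := (M0 + g *: M1)^T *m ((Gm g)^T *m Wm).
have dA0 : \det A0 != 0 by rewrite det_mulmx det_tr mulf_neq0 // detGW.
have [e [e1 He]] := det_poly_avoid (Vm^T *m Wm) dA0 1.
have e0 : 0 < e by apply: lt_le_trans e1; exact: ltr01.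
exists Lm, (Gm g *m (Gm g)^T + e%:M); split; last by rewrite matA_eq.
split.
- move=> u v nD; apply/eqP; apply: contraNT nD; exact: Lm_D.
- exact: (mulmx1_unit LX).1.
- by rewrite raddfD /= trmx_mul trmxK tr_scalar_mx.
- move=> x xnz.
  have -> : x *m (Gm g *m (Gm g)^T + e%:M) *m x^T =
     (x *m Gm g) *m (x *m Gm g)^T + e *: (x *m x^T).
    by rewrite mulmxDr mulmxDl mul_mx_scalar -scalemxAl trmx_mul !mulmxA.
  rewrite mxE [X in _ < _ + X]mxE; apply: ltr_wpDl; first exact: sqsum_ge0.
  by apply: mulr_gt0 => //; apply: sqsum_gt0.
- move=> u v uv nB; rewrite !mxE (negbTE uv) mulr0n addr0.
  apply: big1 => l _; rewrite [(Gm g)^T _ _]mxE.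
  case: (eqVneq (Gm g u l) 0) => [->|nu]; first by rewrite mul0r.
  case: (eqVneq (Gm g v l) 0) => [->|nv]; first by rewrite mulr0.
  exfalso; move/Gm_ne0: nu; move/Gm_ne0: nv; have := Hkind l.
  case: (bi l) => [/andP [Bst _]|_]; last first.
    by rewrite !andFb !orbF => /eqP vs /eqP us; move: uv; rewrite us vs eqxx.
  rewrite !andTb => /orP [/eqP vs|/eqP vt] /orP [/eqP us|/eqP ut].
  + by move: uv; rewrite us vs eqxx.
  + by move: nB; rewrite ut vs Bsym Bst.
  + by move: nB; rewrite us vt Bst.
  + by move: uv; rewrite ut vt eqxx.
Qed.


End Core.


Lemma normalize n (D B : rel 'I_n) (Birr : forall v, ~~ B v v) (q : halftrek n) :
  ht_valid D B q -> exists top bi (p : seq 'I_n),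
    [/\ path D top p, uniq (top :: p), last top p = ht_target q,
        {subset top :: p <= ht_right q} &
        if bi then B (ht_source q) top && (ht_source q \notin top :: p)
        else top == ht_source q].
Proof.
case: q => [v r|v u r] /=.
  move=> Hp; case: (shortenP Hp) => p' Hp' Hu Hsub.
  exists v, false, p'; split => //.
  by move=> x; rewrite !inE => /orP [->//|/Hsub ->]; rewrite orbT.
case/andP => Bvu Hp; case: (shortenP Hp) => p' Hp' Hu Hsub.
case: (boolP (v \in u :: p')) => vin; last first.
  exists u, true, p'; split => //; last by rewrite Bvu vin.
  by move=> x; rewrite !inE => /orP [->//|/Hsub ->]; rewrite orbT.
have vp : v \in p'.
  move: vin; rewrite in_cons => /orP [/eqP e|//].
  by move: Bvu; rewrite e (negbTE (Birr u)).
move: Hp' Hu Hsub; case/splitPr: vp => p1 p2 Hp' Hu Hsub.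
exists v, false, p2; split => //.
- by move: Hp'; rewrite cat_path => /andP [_ /andP [_ H2]].
- by move: Hu; rewrite -cat_cons cat_uniq => /and3P [_ _ H2].
- by rewrite last_cat.
- move=> x xin; rewrite !inE; apply/orP; right; apply: Hsub.
  by rewrite mem_cat xin orbT.
Qed.

Theorem lemma4p2 (R : realType) (n k : nat) (D B : rel 'I_n)
    (s t : 'I_k -> 'I_n) (H : 'I_k -> {set 'I_n}) :
  mixed_graph D B ->
  injective s -> injective t ->
  (forall i, H i \subset pa D (s i)) ->
  has_nsi_halftrek_system D B [set s i | i in 'I_k] [set t i | i in 'I_k] ->
  exists (Lambda Omega : 'M[R]_n),
    param_space D B Lambda Omega /\ \det (matA s t H Lambda Omega) != 0.
Proof.
move=> [_ [Birr Bsym]] sinj _ _ [m [pi [Hval Hsrc Htgt Hdis]]].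
have Hex : forall i : 'I_k, exists x : 'I_m * ('I_n * bool * seq 'I_n * 'I_k),
  let: (j, (top, bi, p, sg)) := x in
  [/\ ht_source (pi j) = s i, path D top p && uniq (top :: p), last top p = t sg,
      {subset top :: p <= ht_right (pi j)} &
      if bi then B (s i) top && (s i \notin top :: p) else top == s i].
  move=> i.
  have : s i \in [set ht_source (pi j) | j in 'I_m] by rewrite Hsrc; apply: imset_f.
  case/imsetP => j _ sj.
  have [top [bi [p [Hp Hu Hl Hs Hk]]]] := normalize Birr (Hval j).
  have : ht_target (pi j) \in [set t i | i in 'I_k] by rewrite -Htgt; apply: imset_f.
  case/imsetP => sg _ tg.
  exists (j, (top, bi, p, sg)); split => //; first by rewrite Hp Hu.
    by rewrite Hl tg.
  by rewrite sj.
have [F HF] := fin_all_exists Hex.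
pose rho i := (F i).1.
pose top i := (F i).2.1.1.1.
pose bi i := (F i).2.1.1.2.
pose p i := (F i).2.1.2.
pose sg i := (F i).2.2.
have HF' : forall i, [/\ ht_source (pi (rho i)) = s i,
      path D (top i) (p i) && uniq (top i :: p i), last (top i) (p i) = t (sg i),
      {subset top i :: p i <= ht_right (pi (rho i))} &
      if bi i then B (s i) (top i) && (s i \notin top i :: p i) else top i == s i].
  move=> i; have := HF i; rewrite /rho /top /bi /p /sg.
  by case: (F i) => j [[[a b] c] d].
have Hdisj : forall i j x, x \in top i :: p i -> x \in top j :: p j -> i = j.
  move=> i j x xi xj.
  have [si _ _ subi _] := HF' i; have [sj _ _ subj _] := HF' j.
  case: (eqVneq (rho i) (rho j)) => [e|ne].
    by apply: sinj; rewrite -si -sj e.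
  have := Hdis _ _ ne; case/andP => _ /disjointFr /(_ (subi _ xi)).
  by rewrite (subj _ xj).
have sginj : injective sg.
  move=> i j e; have [_ _ li _ _] := HF' i; have [_ _ lj _ _] := HF' j.
  apply: (Hdisj i j (t (sg i))); first by rewrite -li mem_last.
  by rewrite e -lj mem_last.
have H1 : forall i, path D (top i) (p i) by move=> i; case: (HF' i) => _ /andP [].
have H2 : forall i, uniq (top i :: p i) by move=> i; case: (HF' i) => _ /andP [].
have H3 : forall i, last (top i) (p i) = t (sg i) by move=> i; case: (HF' i).
have H4 : forall i, if bi i then B (s i) (top i) && (s i \notin top i :: p i)
  else top i == s i by move=> i; case: (HF' i).
have [L [O [PS Hdet]]] := @core_main R n k D B s (fun i => t (sg i)) H top bi p
  Bsym sinj H1 H2 H3 H4 Hdisj.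

exists L, O; split => //.
pose sp := perm sginj.
move: Hdet.
have -> : matA s (fun i => t (sg i)) H L O = col_perm sp (matA s t H L O).
  by apply/matrixP => i j; rewrite !mxE permE.
rewrite col_permE det_mulmx; apply: contra => /eqP ->.
by rewrite mul0r.
Qed.
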